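(* For every integer $k \geq 2$ and every $\varepsilon > 0$ there exist $\delta > 0$ and $n_0$ such that the following holds for every $n \geq n_0$. Let $H$ be an $n$-vertex $k$-graph with $\delta_1(H) \geq (2^{-k+1} + \varepsilon)\binom{n-1}{k-1}$. Then for every pair of distinct vertices $x_1, x_2 \in V(H)$, there are at least $\delta n^{2k-3}$ distinct $(x_1, x_2)$-paths of length two in $H$.
   Context: $\delta_1(H)$ is the minimum number of edges containing a vertex. For $x_1, x_2 \in V(H)$, an $(x_1,x_2)$-path is a subgraph $P' \subseteq H$ which equals the $k$-expansion $P^{(k)}$ of a graph path $P$ with endpoints $x_1, x_2$ (the $k$-expansion replaces each edge $uv$ by a $k$-edge consisting of $u$, $v$ and $k-2$ new vertices belonging to no other edge). The length of the path is its number of edges; thus an $(x_1,x_2)$-path of length two consists of two edges $e \ni x_1$, $f \ni x_2$ sharing exactly one vertex, which differs from $x_1, x_2$. *)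

(* Defs.v *)
From HB Require Import structures.
From mathcomp Require Import all_boot all_order all_algebra.
From mathcomp Require Import reals.
Set Implicit Arguments. Unset Strict Implicit. Unset Printing Implicit Defensive.

Definition kgraph (n k : nat) (E : {set {set 'I_n}}) : Prop :=
  forall e, e \in E -> #|e| = k.

Definition deg (n : nat) (E : {set {set 'I_n}}) (v : 'I_n) : nat :=
  #|[set e in E | v \in e]|.

(* (x1,x2)-path of length two: edges e \ni x1, f \ni x2 sharing exactly one
   vertex, which differs from x1 and x2 (given x1 \in e, x2 \in f, this is
   x1 \notin f and x2 \notin e).  The subgraph {e, f} is determined by the
   ordered pair (e, f), e being the edge containing x1. *)
Definition is_path2 (n : nat) (E : {set {set 'I_n}}) (x1 x2 : 'I_n)
  (p : {set 'I_n} * {set 'I_n}) : bool :=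
  [&& p.1 \in E, p.2 \in E, x1 \in p.1, x2 \in p.2,
      #|p.1 :&: p.2| == 1%N, x1 \notin p.2 & x2 \notin p.1].

Definition paths2 (n : nat) (E : {set {set 'I_n}}) (x1 x2 : 'I_n) :=
  [set p | is_path2 E x1 x2 p].

(* Main.v *)
Require Import Defs.
From HB Require Import structures.
From mathcomp Require Import all_boot all_order all_algebra.
From mathcomp Require Import reals.
From mathcomp Require Import zify ring lra.

Lemma card_sum (T : finType) (A : {pred T}) : #|A| = \sum_(x : T) (x \in A : nat).
Proof. by rewrite -sum1_card big_mkcond; apply: eq_bigr => x _; case: (x \in A). Qed.

Lemma leq_expn2r e a b : a <= b -> a ^ e <= b ^ e.
Proof. by case: e => [|e] // ab; rewrite leq_exp2r. Qed.

Lemma cards_sum (T : finType) (A : {set T}) : #|A| = \sum_(x : T) (x \in A : nat).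
Proof. by rewrite -sum1_card big_mkcond; apply: eq_bigr => x _; case: (x \in A). Qed.

Lemma bin_le_exp n m : 'C(n, m) <= n ^ m.
Proof.
elim: m n => [|m IH] n; first by rewrite bin0 expn0.
have h := mul_bin_diag n m.
have h1 : 'C(n, m.+1) <= m.+1 * 'C(n, m.+1) by rewrite leq_pmull.
apply: (leq_trans h1); rewrite -h expnS leq_mul2l.
apply/orP; right; apply: (leq_trans (IH _)); apply: leq_expn2r.
exact: leq_pred.
Qed.

Section Comb.
Variables (n k : nat) (E : {set {set 'I_n}}).
Hypothesis hE : kgraph k E.
Local Notation T := 'I_n.

Lemma subs_count (S : {set T}) : #|[set e in E | S \subset e]| <= 'C(n, k - #|S|).
Proof.
rewrite -[n in 'C(n, _)]card_ord -card_draws.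
rewrite -(card_in_imset (f := fun e => e :\: S)).
  apply: subset_leq_card; apply/subsetP => z /imsetP [e]; rewrite inE => /andP [eE Se] ->.
  by rewrite inE cardsD (setIidPr Se) (hE _ eE).
move=> e1 e2; rewrite !inE => /andP[_ S1] /andP[_ S2] eq.
apply/setP => x; case xS: (x \in S); first by rewrite (subsetP S1) // (subsetP S2).
by have := congr1 (fun B : {set T} => x \in B) eq; rewrite /= !inE xS.
Qed.

Variables (x y : T).
Hypothesis xy : x != y.

Definition Vp := [set w | (w != x) && (w != y)].
Definition A := [set e in E | (x \in e) && (y \notin e)].
Definition D w := [set e in A | w \in e].

Lemma D_le w : w \in Vp -> #|D w| <= 'C(n, k - 2).
Proof.
rewrite inE => /andP [wx wy].
have -> : 2 = #|[set x; w]| by rewrite cards2 eq_sym wx.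
apply: leq_trans (subs_count _); apply: subset_leq_card; apply/subsetP => e.
rewrite !inE => /andP [/andP [eE /andP [xe _]] we]; rewrite eE /=.
by apply/subsetP => z; rewrite !inE => /orP [] /eqP ->.
Qed.

Lemma A_lb : deg E x <= #|A| + 'C(n, k - 2).
Proof.
have -> : 2 = #|[set x; y]| by rewrite cards2 xy.
apply: (@leq_trans #|A :|: [set e in E | [set x; y] \subset e]|); last first.
  apply: leq_trans (leq_card_setU _ _).1 _.
  by rewrite leq_add2l; apply: subs_count.
apply: subset_leq_card; apply/subsetP => e; rewrite !inE => /andP [eE xe].
rewrite eE xe /=; case ye: (y \in e) => //=.
by apply/subsetP => z; rewrite !inE => /orP [] /eqP ->.
Qed.

Lemma A_ub (S1 : {set T}) : S1 \subset Vp ->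
  #|A| <= 'C(#|S1|, k - 1) + \sum_(w in Vp :\: S1) #|D w|.
Proof.
move=> S1V; rewrite -(cardsID [set e | e :\ x \subset S1] A); apply: leq_add.
  rewrite -cards_draws -(@card_in_imset _ _ (fun e => e :\ x)).
    apply: subset_leq_card; apply/subsetP => z /imsetP [e]; rewrite !inE.
    move=> /andP [/andP [eE /andP [xe ye]] sub] ->; rewrite sub /=.
    by have := cardsD1 x e; rewrite xe (hE _ eE) => ->; rewrite add1n subn1.
  move=> e1 e2; rewrite !inE => /andP [/andP [_ /andP [x1 _]] _] /andP [/andP [_ /andP [x2 _]] _] eq.
  by rewrite -(setD1K x1) -(setD1K x2) eq.
apply: leq_trans (unstable.card_big_setU _ _ _).
apply: subset_leq_card; apply/subsetP => e; rewrite !inE => /andP [nsub /andP [eE /andP [xe ye]]].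
have [w wex wS] := subsetPn nsub.
apply/bigcupP; exists w.
  move: wex; rewrite !inE => /andP [wx we]; rewrite wS wx /=.
  by apply: contraNneq ye => <-.
by move: wex; rewrite !inE => /andP [wx we]; rewrite eE xe ye we.
Qed.

End Comb.

Section Comb2.
Variables (n k : nat) (E : {set {set 'I_n}}).
Hypothesis hE : kgraph k E.
Local Notation T := 'I_n.
Variables (x y : T).
Hypothesis xy : x != y.

Definition g w := \sum_(e in D n E x y w) #|[set f in D n E y x w | e :&: f == [set w]]|.

Lemma per_w w : w \in Vp n x y ->
  #|D n E x y w| * #|D n E y x w| <= g w + #|D n E x y w| * ((k - 2) * 'C(n, k - 3)).
Proof.
rewrite inE => /andP [wx wy].
rewrite -!sum_nat_const -big_split /=; apply: leq_sum => e.
rewrite !inE => /andP [/andP [eE /andP [xe ye]] we].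
rewrite -(cardsID [set f | e :&: f == [set w]] (D n E y x w)) setIdE leq_add2l.
set X := e :\: [set x; w].
have cX : #|X| = k - 2.
  rewrite cardsD (setIidPr _) ?(hE _ eE) ?cards2 ?(eq_sym x) ?wx //.
  by apply/subsetP => z; rewrite !inE => /orP [] /eqP ->.
apply: (@leq_trans #|\bigcup_(u in X) [set f in E | [set y; w; u] \subset f]|).
  apply: subset_leq_card; apply/subsetP => f; rewrite !inE.
  move=> /andP [nI /andP [/andP [fE /andP [yf xf]] wf]].
  move: nI; rewrite eqEsubset sub1set !inE we wf /= andbT => nsub.
  have [u] := subsetPn nsub; rewrite !inE => /andP [ue uf] uw.
  apply/bigcupP; exists u.
    rewrite /X !inE negb_or ue uw !andbT; by apply: contraNneq xf => <-.
  rewrite inE fE /=; apply/subsetP => z; rewrite !inE => /orP [/orP [] |] /eqP -> //.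
apply: leq_trans (unstable.card_big_setU _ _ _) _.
rewrite -cX -sum_nat_const; apply: leq_sum => u.
rewrite !inE => /andP [/norP [ux uw] ue].
have -> : 3 = #|[set y; w; u]|.
  rewrite -setUA cardsU1 cards2 (eq_sym w) uw !inE negb_or.
  rewrite (eq_sym y) wy /=.
  have -> : y != u by apply: contraNneq ye => ->.
  done.
exact: (@subs_count n k E hE _).
Qed.

Lemma paths_lb (S : {set T}) : \sum_(w in S) g w <= #|paths2 E x y|.
Proof.
pose c w e f : nat := (e \in D n E x y w) && ((f \in D n E y x w) && (e :&: f == [set w])).
have gE w : g w = \sum_e \sum_f c w e f.
  rewrite /g big_mkcond; apply: eq_bigr => e _; rewrite /c.
  case: (e \in D n E x y w) => /=; last by rewrite big1.
  by rewrite cards_sum; apply: eq_bigr => f _; rewrite !inE.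
apply: (@leq_trans (\sum_w g w)).
  rewrite [X in _ <= X](bigID (fun w => w \in S)) /=; exact: leq_addr.
rewrite (eq_bigr _ (fun w _ => gE w)) exchange_big /=.
under eq_bigr => e _ do rewrite exchange_big.
rewrite cards_sum (eq_bigr (fun p : {set T} * {set T} => ((p.1, p.2) \in paths2 E x y : nat))); last by case.
rewrite -(pair_bigA _ (fun e f => ((e, f) \in paths2 E x y : nat))) /=.
apply: leq_sum => e _; apply: leq_sum => f _.
rewrite inE /is_path2 /=.
case H: [&& e \in E, f \in E, x \in e, y \in f, #|e :&: f| == 1, x \notin f & y \notin e].
  move: H => /and5P [_ _ _ _ /and3P [/eqP c1 _ _]].
  apply: (@leq_trans #|e :&: f|); last by rewrite c1.
  rewrite cards_sum; apply: leq_sum => w _; rewrite /c.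
  case: (e :&: f =P [set w]) => [->|]; last by rewrite !andbF.
  by rewrite set11; case: (_ && _).
rewrite big1 // => w _; rewrite /c; apply/eqP; rewrite eqb0.
apply/negP; rewrite !inE => /andP [/andP [/andP [eE /andP [xe ye]] we] /andP [/andP [/andP [fE /andP [yf xf]] wf] /eqP I]].
by move: H; rewrite eE fE xe yf I cards1 xf ye.
Qed.

End Comb2.

Lemma bin_lower N m : (N - m) ^ m <= 'C(N, m) * m ^ m.
Proof.
elim: m N => [|m IH] N; first by rewrite bin0 !expn0.
have h := mul_bin_diag N m.
have e1 : N - m.+1 = N.-1 - m by lia.
rewrite expnS e1.
apply: (@leq_trans (N * ('C(N.-1, m) * m ^ m))).
  apply: leq_mul; [lia | exact: IH].
apply: (@leq_trans (N * 'C(N.-1, m) * m.+1 ^ m)).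
  by rewrite mulnA leq_mul2l leq_expn2r ?orbT.
by rewrite h expnS mulnCA mulnA.
Qed.

Lemma bin_ratio m s N : s <= N -> 'C(s, m) * N ^ m <= s ^ m * 'C(N, m).
Proof.
elim: m s N => [|m IH] s N sN; first by rewrite !bin0 !expn0.
case: s sN => [|s] sN; first by rewrite bin0n.
case: N sN => [|N] //; rewrite ltnS => sN.
rewrite -(leq_pmul2l (ltn0Sn m)) mulnA -mul_bin_diag /=.
rewrite mulnCA -mul_bin_diag /= !expnS.
rewrite -!mulnA leq_mul2l /= mulnCA [X in _ <= X]mulnCA leq_mul2l /=.
case: N sN => [|N'] sN.
  by move: sN; rewrite leqn0 => /eqP ->; rewrite !exp1n muln1 mul1n.
set N := N'.+1 in sN *.
rewrite -(leq_pmul2r (expn_gt0 N m)).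
apply: (@leq_trans (s ^ m * 'C(N, m) * N.+1 ^ m)).
  by rewrite mulnAC leq_mul2r IH ?orbT.
rewrite mulnAC [X in _ <= X]mulnAC leq_mul2r; apply/orP; right.
rewrite -!expnMn; apply: leq_expn2r; nia.
Qed.

Lemma bad_bound n p : n * (p * 'C(n, p - 1)) <= p.+2 * n ^ p.
Proof.
case: p => [|p]; first by rewrite mul0n muln0.
rewrite subn1 /= mulnCA expnS; apply: leq_mul; first by apply: leqW; apply: leqW.
by rewrite leq_mul2l bin_le_exp orbT.
Qed.

Lemma Nm_le N m : 2 * m <= N -> N ^ m <= (2 * m) ^ m * 'C(N, m).
Proof.
move=> h; apply: (@leq_trans ((2 * (N - m)) ^ m)); first by apply: leq_expn2r; lia.
by rewrite !expnMn -mulnA leq_mul2l mulnC bin_lower orbT.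
Qed.

Lemma card_Vp n (x y : 'I_n) : x != y -> #|Vp n x y| = n - 2.
Proof.
move=> xy; have -> : Vp n x y = ~: [set x; y].
  by apply/setP => z; rewrite !inE negb_or.
have h := cardsC [set x; y]; rewrite cards2 xy card_ord in h; lia.
Qed.

Lemma Vp_sym n (x y : 'I_n) : Vp n x y = Vp n y x.
Proof. by apply/setP => z; rewrite !inE andbC. Qed.

Import Order.TTheory GRing.Theory Num.Theory.
Local Open Scope ring_scope.

Lemma pow_diff (R : realType) (m : nat) (a b : R) : 0 <= b -> b <= a -> a <= 1 ->
  a ^+ m - b ^+ m <= m%:R * (a - b).
Proof.
move=> b0 ba a1; elim: m => [|m IH]; first by rewrite !expr0 subrr mul0r.
have a0 : 0 <= a by apply: le_trans ba.
have hX : 0 <= a ^+ m - b ^+ m by rewrite subr_ge0 lerXn2r // nnegrE.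
have hb : b ^+ m <= 1 by apply: exprn_ile1 => //; apply: le_trans a1.
have -> : a ^+ m.+1 - b ^+ m.+1 = a * (a ^+ m - b ^+ m) + (a - b) * b ^+ m.
  by rewrite !exprS; ring.
rewrite -addn1 natrD [X in _ <= X]mulrDl mul1r; apply: lerD.
  apply: le_trans IH; rewrite -[X in _ <= X]mul1r; exact: ler_wpM2r.
rewrite -[X in _ <= X]mulr1; apply: ler_wpM2l => //; by rewrite subr_ge0.
Qed.

Lemma natL1 n p : (2 * p.+1 <= n - 2)%N -> (0 < n - 2)%N.
Proof. lia. Qed.
Lemma natL2 n : (n - 2 <= n - 1)%N.
Proof. lia. Qed.
Lemma natL3 n : (4 <= n)%N -> (n <= 2 * (n - 2))%N.
Proof. lia. Qed.
Lemma natL4 n p : (2 * p.+1 <= n - 2)%N -> (p.+1 <= n - 2)%N.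
Proof. lia. Qed.

Lemma eq_ler (R : numDomainType) (a b : R) : a = b -> a <= b.
Proof. by move->. Qed.

Lemma S_large (R : realType) n p (E : {set {set 'I_n}}) (hE : kgraph p.+2 E)
  (x y : 'I_n) (xy : x != y) (eps c : R) :
  0 < eps -> (4 <= n)%N -> (2 * p.+1 <= n - 2)%N ->
  4 * ((2 * p.+1) ^ p.+1)%:R * 2 ^+ p.+1 <= eps * (n - 2)%:R ->
  0 <= c -> c <= 2^-1 -> p.+1%:R * c <= eps / 2 ->
  (2%:R ^- p.+1 + eps) * ('C(n - 1, p.+1))%:R <= (deg E x)%:R ->
  (2^-1 + c) * (n - 2)%:R <=
  #|[set w in Vp n x y | eps / (4 * ((2 * p.+1) ^ p.+1)%:R) * (n - 2)%:R ^+ p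
                          <= (#|D n E x y w|)%:R]|%:R.
Proof.
move=> eps0 n4 hN h8 c0 c2 mc F0.
set N := (n - 2)%N in hN h8 *.
set rho := ((2 * p.+1) ^ p.+1)%:R : R.
set t := eps / (4 * rho) * N%:R ^+ p.
set S := [set w in Vp n x y | t <= (#|D n E x y w|)%:R].
have rho0 : 0 < rho by rewrite ltr0n expn_gt0.
have N0 : (0 < N)%N by apply: natL1 hN.
have Nr0 : 0 < N%:R :> R by rewrite ltr0n.
have t0 : 0 <= t.
  by rewrite /t mulr_ge0 ?exprn_ge0 ?ler0n // divr_ge0 ?mulr_ge0 ?ler0n // ltW.
have SV : S \subset Vp n x y by apply/subsetP => w; rewrite inE => /andP [].
have sN : (#|S| <= N)%N by rewrite /N -(@card_Vp n x y xy); apply: subset_leq_card.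
have h1 := @A_lb n p.+2 E hE x y xy; rewrite (_ : (p.+2 - 2 = p)%N) in h1; last by rewrite !subSS subn0.
have h2 := @A_ub n p.+2 E hE x y S SV; rewrite (_ : (p.+2 - 1 = p.+1)%N) in h2; last by rewrite subSS subn0.
have h3 : (\sum_(w in Vp n x y :\: S) #|D n E x y w|)%:R <= N%:R * t.
  rewrite natr_sum; apply: (@le_trans _ _ (\sum_(w in Vp n x y :\: S) t)).
    apply: ler_sum => w; rewrite !inE => /andP [wS wV]; rewrite wV /= in wS.
    by apply: ltW; rewrite ltNge.
  rewrite sumr_const -[t *+ _]mulr_natl; apply: ler_wpM2r => //; rewrite ler_nat /N -(@card_Vp n x y xy).
  by apply: subset_leq_card; apply: subsetDl.
have h4 := @bin_ratio p.+1 _ _ sN.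
have h5 : (N ^ p.+1 <= (2 * p.+1) ^ p.+1 * 'C(N, p.+1))%N by apply: Nm_le.
have h6 : ('C(N, p.+1) <= 'C(n - 1, p.+1))%N by apply: leq_bin2l; apply: natL2.
have h7 : ('C(n, p) <= 2 ^ p * N ^ p)%N.
  apply: leq_trans (bin_le_exp _ _) _; rewrite -expnMn; apply: leq_expn2r; exact: natL3 n4.
have Bpos : (0 < 'C(N, p.+1))%N by rewrite bin_gt0; apply: natL4.
move: h1 h2 h4 h5 h6 h7 h3 F0 h8 Bpos.
rewrite -!(ler_nat R) !(natrD, natrM, natrX).
set B := ('C(N, p.+1))%:R. set Cs := ('C(#|S|, p.+1))%:R.
set Nr := N%:R. set sr := #|S|%:R. set Dg := (deg E x)%:R. set Ar := #|A n E x y|%:R.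
set Cn1 := ('C(n - 1, p.+1))%:R. set Cnp := ('C(n, p))%:R.
set Sm := (\sum_(_ in _) _)%:R.
have rhoE : rho = (2 * p.+1%:R) ^+ p.+1 by rewrite /rho natrX natrM.
rewrite -rhoE.
move=> h1 h2 h4 h5 h6 h7 h3 F0 h8 B0.
have B0' : 0 < B by apply: lt_le_trans B0.
set P := Nr ^+ p.
have NmE : Nr ^+ p.+1 = Nr * P by rewrite exprS.
have P0 : 0 <= P by rewrite exprn_ge0 // ltW.
have G2 : Nr * t <= eps / 4 * B.
  have -> : Nr * t = eps / (4 * rho) * Nr ^+ p.+1 by rewrite NmE /t -/P; field; rewrite gt_eqF.
  apply: (@le_trans _ _ (eps / (4 * rho) * (rho * B))).
    apply: ler_wpM2l => //; by rewrite divr_ge0 ?mulr_ge0 // ltW.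
  by apply: eq_ler; field; rewrite gt_eqF.
have G3 : Cnp <= eps / 4 * B.
  apply: le_trans h7 _.
  have h9 : 4 * rho * (2 ^+ p * P) <= eps * rho * B.
    apply: (@le_trans _ _ (4 * rho * 2 ^+ p.+1 * P)).
      rewrite mulrA; apply: ler_wpM2r => //; apply: ler_wpM2l.
        by rewrite mulr_ge0 // ltW.
      by rewrite exprS ler_peMl ?exprn_ge0 // ler1n.
    apply: (@le_trans _ _ (eps * Nr * P)); first by apply: ler_wpM2r.
    rewrite -mulrA -NmE -mulrA; apply: ler_wpM2l => //; exact: ltW.
  have r4 : 0 < 4 * rho by rewrite mulr_gt0.
  rewrite -(ler_pM2l r4); apply: (le_trans h9); apply: eq_ler; by field.
have G1 : (2 ^- p.+1 + eps) * B <= (2 ^- p.+1 + eps) * Cn1.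
  by apply: ler_wpM2l => //; rewrite addr_ge0 ?invr_ge0 ?exprn_ge0 // ltW.
have G4 : (2 ^- p.+1 + eps / 2) * B <= Cs by lra.
have G5 : (2 ^- p.+1 + eps / 2) * Nr ^+ p.+1 <= sr ^+ p.+1.
  rewrite -(ler_pM2l B0'); apply: le_trans (_ : Cs * Nr ^+ p.+1 <= _); last by rewrite [B * _]mulrC.
  rewrite mulrA [B * _]mulrC; apply: ler_wpM2r => //; by rewrite exprn_ge0 // ltW.
rewrite leNgt; apply/negP => lt.
have sr0 : 0 <= sr by rewrite ler0n.
have h10 : sr ^+ p.+1 < ((2^-1 + c) * Nr) ^+ p.+1 by rewrite ltrXn2r.
have h11 := @pow_diff R p.+1 (2^-1 + c) 2^-1.
have h12 : (2^-1 + c) ^+ p.+1 <= 2 ^- p.+1 + eps / 2.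
  rewrite -exprVn; suff : (2^-1 + c) ^+ p.+1 - 2^-1 ^+ p.+1 <= eps / 2 by lra.
  apply: le_trans mc; have -> : p.+1%:R * c = p.+1%:R * (2^-1 + c - 2^-1) by congr (_ * _); ring.
  apply: h11; [by rewrite invr_ge0 | lra | lra].
have : ((2^-1 + c) * Nr) ^+ p.+1 <= (2 ^- p.+1 + eps / 2) * Nr ^+ p.+1.
  by rewrite exprMn; apply: ler_wpM2r => //; rewrite exprn_ge0 // ltW.
lra.
Qed.

Lemma natL5 p b1 b2 n : (2 * p.+1 + 4 + b1 + b2 <= n)%N ->
  [/\ (4 <= n)%N, (2 * p.+1 <= n - 2)%N, (b1 <= n - 2)%N & (b2 <= n)%N].
Proof. move=> h; split; lia. Qed.

Lemma natL6 p : (2 * p.+2 - 3 = (2 * p).+1)%N.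
Proof. lia. Qed.

Lemma natL7 n p (S : nat) X : (S <= n)%N -> (n * X <= p.+2 * n ^ p)%N ->
  (S * (n ^ p * X) <= n ^ p * (p.+2 * n ^ p))%N.
Proof.
move=> Sn h; apply: (@leq_trans (n * (n ^ p * X))); first by rewrite leq_mul2r Sn orbT.
by rewrite mulnCA leq_mul2l h orbT.
Qed.


Theorem lemma4p8 (R : realType) (k : nat) (eps : R) :
  (2 <= k)%N -> 0 < eps ->
  exists delta : R, 0 < delta /\
  exists n0 : nat, forall (n : nat) (E : {set {set 'I_n}}),
    (n0 <= n)%N -> kgraph k E ->
    (forall v : 'I_n,
       ((2%:R ^- (k - 1)%N + eps) * ('C(n - 1, k - 1))%:R <= (deg E v)%:R)) ->
    forall x1 x2 : 'I_n, x1 != x2 ->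
      delta * n%:R ^+ (2 * k - 3)%N <= (#|paths2 E x1 x2|)%:R.
Proof.
case: k => [|[|p]] // _ eps0.
rewrite natL6 (_ : (p.+2 - 1 = p.+1)%N); last by rewrite subSS subn0.
set rho := ((2 * p.+1) ^ p.+1)%:R : R.
have rho0 : 0 < rho by rewrite ltr0n expn_gt0.
set gam := eps / (4 * rho).
have gam0 : 0 < gam by rewrite divr_gt0 // mulr_gt0.
set c := Order.min (2^-1 : R) (eps / (2 * p.+1%:R)).
have c0 : 0 < c by rewrite lt_min invr_gt0 ltr0n /= divr_gt0 // mulr_gt0.
have c2 : c <= 2^-1 by rewrite ge_min lexx.
have mc : p.+1%:R * c <= eps / 2.
  apply: (@le_trans _ _ (p.+1%:R * (eps / (2 * p.+1%:R)))).
    by apply: ler_wpM2l; rewrite ?ler0n // ge_min lexx orbT.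
  by apply: eq_ler; field; rewrite paddr_eq0 ?ler0n // oner_eq0.
set delta := c * gam ^+ 2 / 2 ^+ (2 * p).+1.
have delta0 : 0 < delta.
  apply: divr_gt0; first by apply: mulr_gt0 => //; apply: exprn_gt0.
  by apply: exprn_gt0; rewrite ltr0n.
exists delta; split => //.
set b1 := Num.Def.archi_bound (4 * rho * 2 ^+ p.+1 / eps).
set b2 := Num.Def.archi_bound (p.+2%:R / delta).
exists (2 * p.+1 + 4 + b1 + b2)%N => n E hn hE hdeg x1 x2 x12.
have [n4 hN hb1 hb2] := @natL5 _ _ _ _ hn.
have h8 : 4 * rho * 2 ^+ p.+1 <= eps * (n - 2)%:R.
  have := @archi_boundP R (4 * rho * 2 ^+ p.+1 / eps).
  rewrite -/b1 => h; have {h} h : 4 * rho * 2 ^+ p.+1 / eps < (n - 2)%:R.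
    apply: lt_le_trans (h _) _; first by rewrite divr_ge0 ?mulr_ge0 ?exprn_ge0 // ltW.
    by rewrite ler_nat.
  by move/ltW: h; rewrite ler_pdivrMr // [_ * eps]mulrC.
have hd : p.+2%:R <= delta * n%:R.
  have := @archi_boundP R (p.+2%:R / delta).
  rewrite -/b2 => h; have {h} h : p.+2%:R / delta < n%:R.
    apply: lt_le_trans (h _) _; first by rewrite divr_ge0 // ltW.
    by rewrite ler_nat.
  by move/ltW: h; rewrite ler_pdivrMr // [_ * delta]mulrC.
have x21 : x2 != x1 by rewrite eq_sym.
have hS1 := @S_large R n p E hE x1 x2 x12 eps c eps0 n4 hN h8 (ltW c0) c2 mc (hdeg x1).
have hS2 := @S_large R n p E hE x2 x1 x21 eps c eps0 n4 hN h8 (ltW c0) c2 mc (hdeg x2).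
set t := eps / (4 * rho) * (n - 2)%:R ^+ p in hS1 hS2.
set S1 := [set w in Vp n x1 x2 | _] in hS1.
set S2 := [set w in Vp n x2 x1 | _] in hS2.
have S1V : S1 \subset Vp n x1 x2 by apply/subsetP => w; rewrite inE => /andP [].
have S2V : S2 \subset Vp n x1 x2 by rewrite Vp_sym; apply/subsetP => w; rewrite inE => /andP [].
have hS : (#|S1| + #|S2| <= #|S1 :&: S2| + (n - 2))%N.
  rewrite -cardsUI addnC leq_add2l -(@card_Vp n x1 x2 x12).
  by apply: subset_leq_card; rewrite subUset S1V S2V.
set S := S1 :&: S2.
have SV w : w \in S -> w \in Vp n x1 x2.
  by rewrite inE => /andP [w1 _]; apply: (subsetP S1V).
have e2 : (p.+2 - 2 = p)%N by rewrite !subSS subn0.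
have e3 : (p.+2 - 3 = p - 1)%N by rewrite !subSS.
have hsum : (\sum_(w in S) #|D n E x1 x2 w| * #|D n E x2 x1 w| <=
              #|paths2 E x1 x2| + n ^ p * (p.+2 * n ^ p))%N.
  apply: (@leq_trans (\sum_(w in S) g n E x1 x2 w +
      \sum_(w in S) #|D n E x1 x2 w| * ((p.+2 - 2) * 'C(n, p.+2 - 3)))%N).
    rewrite -big_split /=; apply: leq_sum => w wS.
    exact: (@per_w n p.+2 E hE x1 x2 w (SV w wS)).
  apply: leq_add; first exact: paths_lb.
  rewrite e2 e3.
  apply: (@leq_trans (\sum_(w in S) n ^ p * (p * 'C(n, p - 1)))).
    apply: leq_sum => w wS; rewrite leq_mul2r; apply/orP; right.
    have := @D_le n p.+2 E hE x1 x2 w (SV w wS); rewrite e2 => h.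
    exact: leq_trans h (bin_le_exp _ _).
  rewrite sum_nat_const; apply: natL7; last exact: bad_bound.
  by rewrite -[X in (_ <= X)%N]card_ord; apply: max_card.
have t0 : 0 <= t by rewrite /t mulr_ge0 ?exprn_ge0 ?ler0n // -/gam ltW.
have hmain : #|S|%:R * (t * t) <= #|paths2 E x1 x2|%:R + (n ^ p * (p.+2 * n ^ p))%:R.
  rewrite -natrD; apply: le_trans (_ : _ <= (\sum_(w in S) #|D n E x1 x2 w| * #|D n E x2 x1 w|)%:R) _; last by rewrite ler_nat.
  rewrite natr_sum [#|S|%:R * _]mulr_natl -sumr_const; apply: ler_sum => w.
  rewrite inE => /andP [w1 w2]; move: w1 w2; rewrite !inE => /andP [_ h1] /andP [_ h2].
  by rewrite natrM; apply: ler_pM.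
have hSr : 2 * c * (n - 2)%:R <= #|S|%:R.
  move: hS; rewrite -(ler_nat R) !natrD => hS'; lra.
set Nr := (n - 2)%:R in hSr hmain h8 hS1 hS2 * .
set nr := n%:R in hd *.
have tt : t * t = gam ^+ 2 * Nr ^+ (2 * p).
  by rewrite /t /Nr -/gam mul2n -addnn exprD; ring.
have hK : (n ^ p * (p.+2 * n ^ p))%:R = p.+2%:R * nr ^+ (2 * p) :> R.
  by rewrite !natrM !natrX mul2n -addnn exprD; ring.
have hX : nr ^+ (2 * p).+1 <= 2 ^+ (2 * p).+1 * Nr ^+ (2 * p).+1.
  rewrite /nr /Nr -!natrX -natrM ler_nat -expnMn; apply: leq_expn2r; exact: natL3 n4.
have a : delta * nr ^+ (2 * p).+1 <= c * gam ^+ 2 * Nr ^+ (2 * p).+1.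
  have h2p : 0 < (2 : R) ^+ (2 * p).+1 by rewrite exprn_gt0 // ltr0n.
  rewrite /delta mulrAC ler_pdivrMr // -mulrA [_ * 2 ^+ _]mulrC mulrA.
  rewrite [X in _ <= X]mulrCA; apply: ler_wpM2l; last exact: hX.
  apply: mulr_ge0; [exact: ltW | apply: exprn_ge0; exact: ltW].
have b : 2 * (c * gam ^+ 2 * Nr ^+ (2 * p).+1) <= #|S|%:R * (t * t).
  rewrite tt; apply: le_trans (_ : 2 * c * Nr * (gam ^+ 2 * Nr ^+ (2 * p)) <= _).
    by apply: eq_ler; rewrite [Nr ^+ (2 * p).+1]exprS; ring.
  apply: ler_wpM2r hSr; apply: mulr_ge0; apply: exprn_ge0; [exact: ltW | by rewrite /Nr ler0n].
have cc : p.+2%:R * nr ^+ (2 * p) <= delta * nr ^+ (2 * p).+1.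
  rewrite exprS mulrA; apply: ler_wpM2r => //; rewrite exprn_ge0 // ler0n.
rewrite hK in hmain.
lra.
Qed.
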